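(* Let $(M,g,S)$ be as in the context and $u$ a tangent vector at a point of $M$. If $u$ is space-like (respectively isotropic, time-like) with respect to $\tilde g$, then $Su$, $S^2u$ and $S^3u$ are space-like (respectively isotropic, time-like).
   Context: $M$ is a 4-dimensional differentiable manifold with a positive definite metric $g$ and a tensor field $S$ of type $(1,1)$ whose components in some local coordinate system form the matrix with rows $(0,1,0,0)$, $(0,0,1,0)$, $(0,0,0,1)$, $(-1,0,0,0)$; hence $S^4=-\mathrm{id}$. It is assumed that $g(Su,Sv)=g(u,v)$ for all vector fields $u,v$. The associated metric is $\tilde g(u,v)=g(u,Sv)+g(Su,v)$. A vector $u$ is space-like if $\tilde g(u,u)>0$, time-like if $\tilde g(u,u)<0$, and isotropic if $u\neq 0$ and $\tilde g(u,u)=0$. *)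

(* Defs.v *)
From HB Require Import structures.
From mathcomp Require Import all_boot all_order all_algebra.
Set Implicit Arguments. Unset Strict Implicit. Unset Printing Implicit Defensive.
Import Order.TTheory GRing.Theory Num.Theory.
Local Open Scope ring_scope.

(* Pointwise setting: the tangent space at a point of M is identified, via the
   given local coordinates, with column vectors 'cV[R]_4. *)

(* The structure S: row i of its component matrix is
   (0,1,0,0), (0,0,1,0), (0,0,0,1), (-1,0,0,0); it acts on u by (S u)^i = S^i_j u^j. *)
Definition Smat {R : pzRingType} : 'M[R]_4 :=
  \matrix_(i < 4, j < 4)
    (if (i < 3)%N then ((j : nat) == i.+1)%:R else - ((j : nat) == 0%N)%:R).

Definition gform {R : pzRingType} (G : 'M[R]_4) (u v : 'cV[R]_4) : R :=
  (u^T *m G *m v) 0 0.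

Definition metric_symmetric {R : pzRingType} (G : 'M[R]_4) : Prop :=
  forall u v : 'cV[R]_4, gform G u v = gform G v u.

Definition metric_pos_def {R : numDomainType} (G : 'M[R]_4) : Prop :=
  forall u : 'cV[R]_4, u != 0 -> 0 < gform G u u.

Definition S_compatible {R : pzRingType} (G : 'M[R]_4) : Prop :=
  forall u v : 'cV[R]_4, gform G (Smat *m u) (Smat *m v) = gform G u v.

Definition gtilde {R : pzRingType} (G : 'M[R]_4) (u v : 'cV[R]_4) : R :=
  gform G u (Smat *m v) + gform G (Smat *m u) v.

Definition space_like {R : numDomainType} (G : 'M[R]_4) (u : 'cV[R]_4) : Prop :=
  0 < gtilde G u u.
Definition time_like {R : numDomainType} (G : 'M[R]_4) (u : 'cV[R]_4) : Prop :=
  gtilde G u u < 0.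
Definition isotropic {R : numDomainType} (G : 'M[R]_4) (u : 'cV[R]_4) : Prop :=
  u != 0 /\ gtilde G u u = 0.

(* Main.v *)
Require Import Defs.
From HB Require Import structures.
From mathcomp Require Import all_boot all_order all_algebra.
Import GRing.Theory Num.Theory.
Local Open Scope ring_scope.

Lemma powS_mul (R : realFieldType) k (u : 'cV[R]_4) :
  (Smat ^+ k.+1) *m u = Smat *m ((Smat ^+ k) *m u).
Proof. by rewrite exprS -mulmxE mulmxA. Qed.

Lemma inv_pow (R : realFieldType) (G : 'M[R]_4) (GS : S_compatible G) k (u : 'cV[R]_4) :
  gtilde G ((Smat ^+ k) *m u) ((Smat ^+ k) *m u) = gtilde G u u /\
  gform G ((Smat ^+ k) *m u) ((Smat ^+ k) *m u) = gform G u u.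
Proof.
elim: k => [|k [IH1 IH2]]; first by rewrite expr0 mul1mx.
rewrite powS_mul; split; last by rewrite GS.
by rewrite -IH1 /gtilde !GS.
Qed.

Theorem corollary2p3 (R : realFieldType) (G : 'M[R]_4)
  (Gsym : metric_symmetric G) (Gpos : metric_pos_def G) (GS : S_compatible G)
  (u : 'cV[R]_4) :
  forall k : nat, (1 <= k <= 3)%N ->
    (space_like G u -> space_like G ((Smat ^+ k) *m u)) /\
    (isotropic G u -> isotropic G ((Smat ^+ k) *m u)) /\
    (time_like G u -> time_like G ((Smat ^+ k) *m u)).
Proof.
move=> k _; have [H1 H2] := @inv_pow R G GS k u.
rewrite /space_like /isotropic /time_like H1; split => //; split => //.
move=> [Hu ->]; split => //.
apply/eqP => H0; have := Gpos _ Hu; rewrite -H2 H0 /gform.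
by rewrite trmx0 !mul0mx mxE Order.POrderTheory.ltxx.
Qed.
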